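(* Consider the multicast coalitional game with player set $\mathcal{N}=\{1,\ldots,N\}$ and value function $$v(S)=\sum_{i\in S}U_i-\sum_{i\in S}\frac{\alpha_i}{R_S}-\frac{\beta+\gamma}{R_S},\qquad R_S=\min_{i\in S}R_i,$$ for nonempty $S\subseteq\mathcal{N}$. Suppose $R_i=R_0$ and $P_{Rx,i}=P_{Rx}$ for all $i\in\mathcal{N}$, so that $\alpha_i=\alpha:=aP_{Rx}X$ for all $i$. Let $$x_i=U_i-\frac{\alpha}{R_0}-\frac{\beta+\gamma}{NR_0},\qquad i\in\mathcal{N}.$$ Then the payoff profile $(x_1,\dots,x_N)$ lies in the core.
   Context: A transmitter multicasts a file of size $X>0$ bits to users $\mathcal{N}=\{1,\dots,N\}$. User $i$ has valuation $U_i\in\mathbb{R}$, downloads at rate $R_i>0$, and consumes receive power $P_{Rx,i}>0$; the transmitter transmits at power $P_{Tx}>0$. Costs per unit energy are $a>0$ at users and $b>0$ at the transmitter; bandwidth cost per second is $w>0$. Set $\alpha_i=aP_{Rx,i}X$, $\beta=bP_{Tx}X$, $\gamma=wX$. The core is the set of payoff vectors $(x_1,\dots,x_N)\in\mathbb{R}^N$ with $\sum_{i\in\mathcal{N}}x_i=v(\mathcal{N})$ and $\sum_{i\in S}x_i\ge v(S)$ for every nonempty $S\subseteq\mathcal{N}$. *)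

(* Defs.v *)
From mathcomp Require Import all_boot all_order all_algebra.
Set Implicit Arguments. Unset Strict Implicit. Unset Printing Implicit Defensive.
Import Order.TTheory GRing.Theory Num.Theory.
Local Open Scope ring_scope.

Section Game.
Variables (R : realFieldType) (N : nat).

(* R_S = min_{i in S} Rate i  (only meaningful for nonempty S; for S = set0
   an arbitrary value 1 is returned, never used). *)
Definition rate_min (Rate : 'I_N -> R) (S : {set 'I_N}) : R :=
  match [pick i in S] with
  | Some i0 => \big[Num.min/Rate i0]_(i in S) Rate i
  | None => 1
  end.

Definition multicast_value (U : 'I_N -> R) (alpha : 'I_N -> R) (beta gamma : R)
    (Rate : 'I_N -> R) (S : {set 'I_N}) : R :=
  \sum_(i in S) U i - \sum_(i in S) alpha i / rate_min Rate S
    - (beta + gamma) / rate_min Rate S.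

Definition in_core (v : {set 'I_N} -> R) (x : 'I_N -> R) : Prop :=
  \sum_(i < N) x i = v [set: 'I_N] /\
  forall S : {set 'I_N}, S != set0 -> \sum_(i in S) x i >= v S.

End Game.

(* Main.v *)
Require Import Defs.
From mathcomp Require Import all_boot all_order all_algebra.
From mathcomp Require Import ring lra.
Import Order.TTheory GRing.Theory Num.Theory.
Local Open Scope ring_scope.

Lemma rate_min_const (R : realFieldType) (N : nat) (Rate : 'I_N -> R) R0 S :
  (forall i, Rate i = R0) -> S != set0 -> rate_min Rate S = R0.
Proof.
move=> hR hS; rewrite /rate_min; case: pickP => [i0 _|h].
  apply: (big_ind (fun x => x = R0)).
  - by rewrite hR.
  - by move=> x y -> ->; rewrite /Num.min ltxx.
  - by move=> i _; rewrite hR.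
exfalso; case/set0Pn: hS => x hx; by rewrite h in hx.
Qed.

Lemma sum_x (R : realFieldType) (N : nat) (U : 'I_N -> R) c d (S : {set 'I_N}) :
  \sum_(i in S) (U i - c - d) = \sum_(i in S) U i - #|S|%:R * c - #|S|%:R * d.
Proof.
by rewrite !sumrB !sumr_const !mulr_natl.
Qed.

Theorem proposition1 (R : realFieldType) (N : nat) (hN : (0 < N)%N)
  (X : R) (U : 'I_N -> R) (Rate : 'I_N -> R) (PRx : 'I_N -> R)
  (PTx a b w R0 P : R)
  (hX : 0 < X) (hRate : forall i, 0 < Rate i) (hPRx : forall i, 0 < PRx i)
  (hPTx : 0 < PTx) (ha : 0 < a) (hb : 0 < b) (hw : 0 < w)
  (hR0 : forall i, Rate i = R0) (hP : forall i, PRx i = P) :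
  let alpha := fun i => a * PRx i * X in
  let beta := b * PTx * X in
  let gamma := w * X in
  in_core (multicast_value U alpha beta gamma Rate)
    (fun i => U i - a * P * X / R0 - (beta + gamma) / (N%:R * R0)).
Proof.
move=> alpha beta gamma.
have R0pos : 0 < R0 by rewrite -(hR0 (Ordinal hN)).
have Npos : (0 : R) < N%:R by rewrite ltr0n.
have bg : 0 < beta + gamma.
  by rewrite /beta /gamma addr_gt0 // !mulr_gt0.
have key : forall S : {set 'I_N}, S != set0 ->
   multicast_value U alpha beta gamma Rate S =
   \sum_(i in S) U i - #|S|%:R * (a * P * X / R0) - (beta + gamma) / R0.
  move=> S hS; rewrite /multicast_value (@rate_min_const _ _ _ _ _ hR0 hS).
  congr (_ - _ - _).
  rewrite (eq_bigr (fun=> a * P * X / R0)); last by move=> i _; rewrite /alpha hP.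
  by rewrite sumr_const mulr_natl.
split.
  rewrite key; last by apply/set0Pn; exists (Ordinal hN).
  rewrite (eq_bigl (fun i => i \in [set: 'I_N])); last by move=> i; rewrite inE.
  rewrite sum_x cardsT card_ord.
  congr (_ - _); field; rewrite ?gt_eqF //.
move=> S hS; rewrite key // sum_x lerD2l lerN2.
have hc : (#|S|%:R : R) <= N%:R.
  by rewrite ler_nat -[X in (_ <= X)%N]card_ord max_card.
rewrite [X in _ <= X](_ : _ = N%:R * ((beta + gamma) / (N%:R * R0))); last first.
  field; rewrite ?gt_eqF //.
apply: ler_wpM2r => //.
apply: divr_ge0; [exact: ltW | by rewrite mulr_ge0 // ltW].
Qed.
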